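(* Let $\Theta$ be a causal theory over $\mathfrak L$, let $\phi,\psi\in\mathfrak L$, and let $\Theta'=\Theta\cup\{\phi\triangleright\psi\}$. Write $\Box$ for the modal operator and $\vdash_\Box$ for derivability in $\mathbf S_\Theta$ (language $\mathcal L_\Box$), and $\Box'$, $\vdash_{\Box'}$ for the corresponding operator and derivability in $\mathbf S_{\Theta'}$ (language $\mathcal L_{\Box'}$). Define $\alpha:\mathcal L_{\Box'}\to\mathcal L_\Box$ by $\alpha(a)=a$ for atoms, $\alpha$ commuting with $\neg,\wedge,\vee,\to$ (and fixing $\top,\perp$), and $\alpha(\Box' p)=(\phi\wedge\Box(\psi\to\alpha(p)))\vee\Box\alpha(p)$. Then for all $\Gamma,\Delta\subseteq\mathcal L_{\Box'}$, $\Gamma\vdash_{\Box'}\Delta$ is derivable in $\mathbf S_{\Theta'}$ if and only if $\alpha(\Gamma)\vdash_\Box\alpha(\Delta)$ is derivable in $\mathbf S_\Theta$.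
   Context: $\mathfrak L$ is a classical propositional language. A causal rule is $\phi\triangleright\psi$ with $\phi,\psi\in\mathfrak L$; a causal theory $\Theta$ is a set of causal rules. For a causal theory $\Theta$, the language $\mathcal L_\Box$ is generated by $\mathfrak L$ and a unary operator $\Box$ (associated with $\Theta$). The sequent calculus $\mathbf S_\Theta$ derives sequents $\Gamma\vdash_\Box\Delta$ (collections possibly infinite; derivations well-founded, possibly infinitely branching) via: axiom $p\vdash_\Box p$; $\perp\vdash_\Box$; $\vdash_\Box\top$; weakening and contraction on both sides; classical two-sided LK rules for $\neg,\wedge,\vee,\to$ with shared contexts; $\Box$R: if $\phi_1\triangleright\psi_1,\dots,\phi_k\triangleright\psi_k\in\Theta$ and $\psi_1,\dots,\psi_k\vdash_\Box p$ is derivable, from $\Gamma\vdash_\Box\phi_1\wedge\dots\wedge\phi_k,\Delta$ infer $\Gamma\vdash_\Box\Box p,\Delta$ (empty conjunction $=\top$); $\Box$L: letting $\{S_j\}_{j\in J}$ be all finite $S_j\subseteq\Theta$ with $\{\psi:\phi\triangleright\psi\in S_j\}\vdash_\Box p$ derivable, from $\Gamma,\{\phi:\phi\triangleright\psi\in S_j\}\vdash_\Box\Delta$ for all $j\in J$ infer $\Gamma,\Box p\vdash_\Box\Delta$; multicut: from $\Gamma\vdash_\Box p^m,\Delta$ and $\Gamma',p^n\vdash_\Box\Delta'$ ($m,n>0$) infer $\Gamma,\Gamma'\vdash_\Box\Delta,\Delta'$. The calculus $\mathbf S_{\Theta'}$ is defined identically with $\Theta'$ and a new operator $\Box'$ in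 place of $\Theta$ and $\Box$. *)

(* Defs.v *)
From Stdlib Require Import List Arith.
Import ListNotations.
Set Implicit Arguments.

Section Syntax.
Variable A : Type.

Inductive pform : Type :=
| PAtom : A -> pform
| PTop : pform
| PBot : pform
| PNeg : pform -> pform
| PAnd : pform -> pform -> pform
| POr  : pform -> pform -> pform
| PImp : pform -> pform -> pform.

(* The modal language L_Box (one box operator; the operator's meaning is
   given by the causal theory the calculus is parameterised by) *)
Inductive form : Type :=
| Atom : A -> form
| Top : form
| Bot : form
| Neg : form -> form
| And : form -> form -> form
| Or  : form -> form -> form
| Imp : form -> form -> form
| Box : form -> form.

Fixpoint emb (f : pform) : form :=
  match f with
  | PAtom a => Atom a
  | PTop => Top
  | PBot => Bot
  | PNeg p => Neg (emb p)
  | PAnd p q => And (emb p) (emb q)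
  | POr p q => Or (emb p) (emb q)
  | PImp p q => Imp (emb p) (emb q)
  end.

Fixpoint mdepth (f : form) : nat :=
  match f with
  | Atom _ | Top | Bot => 0
  | Neg p => mdepth p
  | And p q | Or p q | Imp p q => Nat.max (mdepth p) (mdepth q)
  | Box p => S (mdepth p)
  end.

(* causal rule phi |> psi as a pair (phi, psi); causal theory = set of rules *)
Definition crule : Type := (pform * pform)%type.
Definition ctheory : Type := crule -> Prop.

Fixpoint bigconj (l : list pform) : pform :=
  match l with
  | [] => PTop
  | [x] => x
  | x :: xs => PAnd x (bigconj xs)
  end.

Definition fset : Type := form -> Prop.
Definition empty : fset := fun _ => False.
Definition sing (x : form) : fset := fun y => y = x.
Definition add (G : fset) (x : form) : fset := fun y => G y \/ y = x.
Definition union (G H : fset) : fset := fun y => G y \/ H y.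
Definition subset (G H : fset) : Prop := forall y, G y -> H y.
Definition lset (l : list pform) : fset := fun y => exists f, In f l /\ y = emb f.

(* The calculus, parameterised by:
   - Th : the causal theory,
   - allowed : the formulas p for which the box rules (on Box p) may be used,
   - O : the side condition "psi_1,...,psi_k |- p is derivable". *)
Inductive derivO (Th : ctheory) (allowed : form -> Prop)
    (O : list pform -> form -> Prop) : fset -> fset -> Prop :=
| d_ax : forall p, derivO Th allowed O (sing p) (sing p)
| d_botL : derivO Th allowed O (sing Bot) empty
| d_topR : derivO Th allowed O empty (sing Top)
| d_weak : forall G D G' D', derivO Th allowed O G D ->
    subset G G' -> subset D D' -> derivO Th allowed O G' D'
| d_negL : forall G D p, derivO Th allowed O G (add D p) ->
    derivO Th allowed O (add G (Neg p)) D
| d_negR : forall G D p, derivO Th allowed O (add G p) D ->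
    derivO Th allowed O G (add D (Neg p))
| d_andL : forall G D p q, derivO Th allowed O (add (add G p) q) D ->
    derivO Th allowed O (add G (And p q)) D
| d_andR : forall G D p q, derivO Th allowed O G (add D p) ->
    derivO Th allowed O G (add D q) -> derivO Th allowed O G (add D (And p q))
| d_orL : forall G D p q, derivO Th allowed O (add G p) D ->
    derivO Th allowed O (add G q) D -> derivO Th allowed O (add G (Or p q)) D
| d_orR : forall G D p q, derivO Th allowed O G (add (add D p) q) ->
    derivO Th allowed O G (add D (Or p q))
| d_impL : forall G D p q, derivO Th allowed O G (add D p) ->
    derivO Th allowed O (add G q) D -> derivO Th allowed O (add G (Imp p q)) D
| d_impR : forall G D p q, derivO Th allowed O (add G p) (add D q) ->
    derivO Th allowed O G (add D (Imp p q))
| d_boxR : forall G D (l : list crule) p, allowed p ->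
    (forall r, In r l -> Th r) -> O (map snd l) p ->
    derivO Th allowed O G (add D (emb (bigconj (map fst l)))) ->
    derivO Th allowed O G (add D (Box p))
| d_boxL : forall G D p, allowed p ->
    (forall l : list crule, (forall r, In r l -> Th r) -> O (map snd l) p ->
       derivO Th allowed O (union G (lset (map fst l))) D) ->
    derivO Th allowed O (add G (Box p)) D
| d_cut : forall G D G' D' p, derivO Th allowed O G (add D p) ->
    derivO Th allowed O (add G' p) D' ->
    derivO Th allowed O (union G G') (union D D').

(* Side condition psi_1..psi_k |- q, defined by recursion on modal depth
   (fuel n >= mdepth q): box rules inside it are only used on Box p with
   mdepth p < mdepth q. *)
Fixpoint Side (Th : ctheory) (n : nat) (psis : list pform) (q : form) : Prop :=
  match n with
  | 0 => False
  | S m => derivO Th (fun p => mdepth p < mdepth q) (Side Th m) (lset psis) (sing q)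
  end.

Definition Provable (Th : ctheory) (G D : fset) : Prop :=
  derivO Th (fun _ => True) (fun psis p => Side Th (S (mdepth p)) psis p) G D.

Definition ext (Th : ctheory) (phi psi : pform) : ctheory :=
  fun r => Th r \/ r = (phi, psi).

Fixpoint alpha (phi psi : pform) (f : form) : form :=
  match f with
  | Atom a => Atom a
  | Top => Top
  | Bot => Bot
  | Neg p => Neg (alpha phi psi p)
  | And p q => And (alpha phi psi p) (alpha phi psi q)
  | Or p q => Or (alpha phi psi p) (alpha phi psi q)
  | Imp p q => Imp (alpha phi psi p) (alpha phi psi q)
  | Box p => Or (And (emb phi) (Box (Imp (emb psi) (alpha phi psi p))))
                (Box (alpha phi psi p))
  end.

Definition image (g : form -> form) (G : fset) : fset :=
  fun y => exists x, G x /\ y = g x.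

End Syntax.

(* Main.v *)
Require Import Defs.
From Stdlib Require Import List Arith Lia Classical.
Import ListNotations.

Ltac sets :=
  let y := fresh "y" in let Hy := fresh "Hy" in
  intros y Hy; unfold add, union, sing, empty in *;
  repeat match goal with
         | H : _ \/ _ |- _ => destruct H
         | H : False |- _ => destruct H
         end; subst; auto 10.

Section Basic.
Variable A : Type.
Variables (Th : ctheory A) (a : form A -> Prop) (O : list (pform A) -> form A -> Prop).
Notation D := (derivO Th a O).

Lemma wk G D0 G' D' : D G D0 -> subset G G' -> subset D0 D' -> D G' D'.
Proof. intros; eapply d_weak; eauto. Qed.

Lemma conj_left L : forall G D0, D (union G (lset L)) D0 -> D (add G (emb (bigconj L))) D0.
Proof.
  induction L as [|x xs IH]; intros G D0 H.
  - eapply wk; [exact H| |sets].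
    intros y [Hy|[f [[] _]]]; left; auto.
  - destruct xs as [|y ys].
    + eapply wk; [exact H| |sets].
      intros z [Hz|[f [[Hf|[]] ->]]]; [left; auto| right; subst; auto].
    + simpl. apply d_andL. apply IH.
      eapply wk; [exact H| |sets].
      intros z [Hz|[f [[Hf|Hf] ->]]].
      * left; left; auto.
      * left; right; subst; auto.
      * right; exists f; auto.
Qed.

Lemma conj_right L : forall G D0, (forall x, In x L -> D G (add D0 (emb x))) -> D G (add D0 (emb (bigconj L))).
Proof.
  induction L as [|x xs IH]; intros G D0 H.
  - eapply wk; [apply d_topR| sets | sets].
  - destruct xs as [|y ys].
    + apply H; simpl; auto.
    + simpl. apply d_andR; [apply H; simpl; auto|].
      apply IH. intros z Hz; apply H; simpl; auto.
Qed.

Lemma lset_conj G D0 L : subset (lset L) G -> D G (add D0 (emb (bigconj L))).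
Proof.
  intros HL. apply conj_right. intros x Hx.
  eapply wk; [apply d_ax| |sets].
  intros y Hy; unfold sing in Hy; subst; apply HL; exists x; auto.
Qed.

Lemma from_conj G D0 L : D G (add D0 (emb (bigconj L))) -> D (union G (lset L)) D0 -> D G D0.
Proof.
  intros H1 H2. apply conj_left in H2.
  eapply wk; [eapply d_cut; [exact H1|exact H2]| |]; sets.
Qed.

End Basic.
Section Syn.
Variable A : Type.

Lemma mdepth_emb (x : pform A) : mdepth (emb x) = 0.
Proof. induction x; simpl; auto; rewrite IHx1, IHx2; auto. Qed.

Lemma alpha_emb (phi psi x : pform A) : alpha phi psi (emb x) = emb x.
Proof. induction x; simpl; auto; congruence. Qed.

Lemma mdepth_alpha (phi psi : pform A) x : mdepth (alpha phi psi x) = mdepth x.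
Proof. induction x; simpl; rewrite ?mdepth_emb; lia. Qed.

Lemma mdepth_imp_emb (psi : pform A) q : mdepth (Imp (emb psi) q) = mdepth q.
Proof. simpl; rewrite mdepth_emb; lia. Qed.

Lemma allowed_mono (Th : ctheory A) a a2 O G D0 :
  derivO Th a O G D0 -> (forall p, a p -> a2 p) -> derivO Th a2 O G D0.
Proof.
  intros H Ha. induction H.
  all: try (econstructor; eauto; fail).
Qed.

Lemma lset_incl (l l' : list (pform A)) : incl l l' -> subset (lset l) (lset l').
Proof. intros H y [f [Hf ->]]; exists f; auto. Qed.

Lemma Side_mono Th n (psis psis' : list (pform A)) q :
  Side Th n psis q -> incl psis psis' -> Side Th n psis' q.
Proof.
  destruct n; simpl; [tauto|]. intros H Hi.
  eapply wk; [exact H| apply lset_incl; auto | sets].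
Qed.

Lemma Side_imp Th n (psi : pform A) psis q :
  Side Th n psis (Imp (emb psi) q) <-> Side Th n (psi :: psis) q.
Proof.
  destruct n; simpl; [tauto|]. split; intro H.
  - apply allowed_mono with (a := fun p => mdepth p < Nat.max (mdepth (emb psi)) (mdepth q));
      [| intros; rewrite mdepth_emb in *; simpl in *; lia].
    eapply wk.
    + eapply d_cut with (G := lset psis) (D := @empty A) (G' := sing (emb psi)) (D' := sing q) (p := Imp (emb psi) q).
      * eapply wk; [exact H| sets | sets].
      * apply d_impL.
        -- eapply wk; [apply (d_ax _ _ _ (emb psi))| sets| sets].
        -- eapply wk; [apply (d_ax _ _ _ q)| sets| sets].
    + intros y [Hy|Hy]; [destruct Hy as [f [Hf ->]]; exists f; simpl; auto|].
      unfold sing in Hy; subst; exists psi; simpl; auto.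
    + sets.
  - apply allowed_mono with (a := fun p => mdepth p < mdepth q);
      [| intros; rewrite mdepth_emb in *; simpl in *; lia].
    eapply wk; [apply (d_impR (G:=lset psis) (D:=@empty A) (p:=emb psi) (q:=q))| sets | sets].
    eapply wk; [exact H| | sets].
    intros y [f [[Hf|Hf] ->]]; [right; subst; reflexivity| left; exists f; auto].
Qed.
End Syn.
Ltac isets := let y := fresh "y" in let Hy := fresh "Hy" in intros y Hy;
  unfold image, add, union, sing, empty in *;
  repeat match goal with
   | H : _ \/ _ |- _ => destruct H
   | H : False |- _ => destruct H
   | H : exists _, _ |- _ => destruct H
   | H : _ /\ _ |- _ => destruct H
  end; subst; eauto 10.

Lemma split_rules A (Th : ctheory A) phi psi (l : list (crule A)) :
  (forall r, In r l -> ext Th phi psi r) ->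
  (forall r, In r l -> Th r) \/
  (In (phi,psi) l /\ exists l0, (forall r, In r l0 -> Th r) /\ incl l0 l /\
      (forall r, In r l -> In r l0 \/ r = (phi,psi))).
Proof.
  induction l as [|r0 l IH]; intros H.
  - left; intros r [].
  - assert (IH' := IH (fun r Hr => H r (or_intror Hr))).
    destruct (classic (Th r0)) as [T|T].
    + destruct IH' as [IH'|[Hin [l0 [H1 [H2 H3]]]]].
      * left; intros r [<- | Hr]; auto.
      * right; split; [right; auto|]. exists (r0 :: l0); split; [|split].
        -- intros r [<- | Hr]; auto.
        -- intros r [<- | Hr]; [left; auto|right; auto].
        -- intros r [<- | Hr]; [left; left; auto|]. destruct (H3 r Hr); [left; right|right]; auto.
    + assert (E : r0 = (phi,psi)) by (destruct (H r0 (or_introl eq_refl)); tauto). subst r0.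
      right; split; [left; auto|].
      destruct IH' as [IH'|[Hin [l0 [H1 [H2 H3]]]]].
      * exists l; split; [|split]; auto.
        -- intros r Hr; right; auto.
        -- intros r [<- | Hr]; auto.
      * exists l0; split; [|split]; auto.
        -- intros r Hr; right; auto.
        -- intros r [<- | Hr]; auto.
Qed.

Lemma incl_snd A (phi psi : pform A) l l0 :
  (forall r, In r l -> In r l0 \/ r = (phi,psi)) -> incl (map snd l) (psi :: map snd l0).
Proof.
  intros H x Hx. apply in_map_iff in Hx as [r [<- Hr]].
  destruct (H r Hr) as [H4| ->]; [right; apply in_map; auto| left; auto].
Qed.

Arguments split_rules {A Th phi psi l}.
Arguments incl_snd {A phi psi l l0}.
Section Fwd.
Variable A : Type.
Variables (Th : ctheory A) (phi psi : pform A).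
Variables (a a' : form A -> Prop) (O O' : list (pform A) -> form A -> Prop).
Notation al := (alpha phi psi).
Hypothesis Ha : forall p, a' p -> a (al p) /\ a (Imp (emb psi) (al p)).
Hypothesis HE1 : forall p psis, a' p -> (O' psis p <-> O psis (al p)).
Hypothesis HE2 : forall p psis, a' p -> (O psis (Imp (emb psi) (al p)) <-> O (psi::psis) (al p)).
Hypothesis HE4 : forall p psis psis', a' p -> incl psis psis' -> O' psis p -> O' psis' p.

Lemma img_lset_union G L : subset (image al (union G (lset L))) (union (image al G) (lset L)).
Proof.
  intros y [x [[Hx|[f [Hf ->]]] ->]].
  - left; exists x; auto.
  - right; rewrite alpha_emb; exists f; auto.
Qed.

Lemma fwd G D0 : derivO (ext Th phi psi) a' O' G D0 -> derivO Th a O (image al G) (image al D0).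
Proof.
  intros H. induction H.
  - eapply wk; [apply (d_ax _ _ _ (al p)) | isets | isets].
  - eapply wk; [apply d_botL | isets | isets]; try (exists (Bot A); auto).
  - eapply wk; [apply d_topR | isets | isets]; try (exists (Top A); auto).
  - eapply wk; [exact IHderivO| |]; isets.
  - eapply wk; [apply (d_negL (G := image al G) (D := image al D) (p := al p)); eapply wk; [exact IHderivO | isets | isets] | isets | isets]; try (exists (Neg p); auto).
  - eapply wk; [apply (d_negR (G := image al G) (D := image al D) (p := al p)); eapply wk; [exact IHderivO | isets | isets] | isets | isets]; try (exists (Neg p); auto).
  - eapply wk; [apply (d_andL (G := image al G) (D := image al D) (p := al p) (q := al q)); eapply wk; [exact IHderivO | isets | isets] | isets | isets]; try (exists (And p q); auto).
  - eapply wk; [apply (d_andR (G := image al G) (D := image al D) (p := al p) (q := al q)); [eapply wk; [exact IHderivO1 | isets | isets]|eapply wk; [exact IHderivO2 | isets | isets]] | isets | isets]; try (exists (And p q); auto).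
  - eapply wk; [apply (d_orL (G := image al G) (D := image al D) (p := al p) (q := al q)); [eapply wk; [exact IHderivO1 | isets | isets]|eapply wk; [exact IHderivO2 | isets | isets]] | isets | isets]; try (exists (Or p q); auto).
  - eapply wk; [apply (d_orR (G := image al G) (D := image al D) (p := al p) (q := al q)); eapply wk; [exact IHderivO | isets | isets] | isets | isets]; try (exists (Or p q); auto).
  - eapply wk; [apply (d_impL (G := image al G) (D := image al D) (p := al p) (q := al q)); [eapply wk; [exact IHderivO1 | isets | isets]|eapply wk; [exact IHderivO2 | isets | isets]] | isets | isets]; try (exists (Imp p q); auto).
  - eapply wk; [apply (d_impR (G := image al G) (D := image al D) (p := al p) (q := al q)); eapply wk; [exact IHderivO | isets | isets] | isets | isets]; try (exists (Imp p q); auto).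
  -
    rename H2 into Hd, H0 into Hl, H1 into HO.
    assert (IH' : derivO Th a O (image al G) (add (image al D) (emb (bigconj (map fst l))))).
    { eapply wk; [exact IHderivO| isets|]. intros y [x [[Hx|Hx] ->]]; [left; exists x; auto| right; subst; apply alpha_emb]. }
    assert (Hfin : derivO Th a O (image al G) (add (image al D) (al (Box p)))).
    2:{ eapply wk; [exact Hfin| isets| isets]. }
    simpl. apply d_orR.
    destruct (split_rules Hl) as [Hall|[Hin [l0 [H1 [H2 H3]]]]].
    + eapply wk; [apply (d_boxR (G := image al G) (D := image al D) l (al p) (proj1 (Ha _ H))); auto|isets|isets].
      apply HE1; auto.
    + eapply wk; [apply (d_andR (G := image al G) (D := image al D) (p := emb phi)) | isets | isets].
      * eapply from_conj; [eapply wk; [exact IH'| isets| isets]|].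
        eapply wk; [apply (d_ax _ _ _ (emb phi))| | isets].
        intros y Hy; right; exists phi; split; [apply in_map_iff; exists (phi,psi); auto| exact Hy].
      * apply (d_boxR (G := image al G) (D := image al D) l0 (Imp (emb psi) (al p)) (proj2 (Ha _ H))); auto.
        -- apply HE2; auto. apply HE1; auto. eapply HE4; [exact H| |exact HO]. exact (incl_snd H3).
        -- eapply from_conj; [eapply wk; [exact IH'| isets| isets]|].
           apply lset_conj. intros y [f [Hf ->]]. right; exists f; split; auto.
           apply in_map_iff in Hf as [r [<- Hr]]. apply in_map; auto.
  -
    rename H1 into IH, H0 into Hprem.
    assert (Hfin : derivO Th a O (add (image al G) (al (Box p))) (image al D)).
    2:{ eapply wk; [exact Hfin| isets| isets]. }
    simpl. apply d_orL.
    + apply d_andL. eapply d_boxL; [exact (proj2 (Ha _ H))|].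
      intros l Hl HOl.
      assert (HO' : O' (map snd ((phi,psi)::l)) p) by (apply HE1; auto; apply HE2; auto).
      assert (Hl' : forall r, In r ((phi,psi)::l) -> ext Th phi psi r).
      { intros r [<- | Hr]; [right; auto| left; auto]. }
      eapply wk; [exact (IH _ Hl' HO')| |isets].
      intros y [x [[Hx|Hx] ->]]; [left; left; exists x; auto|].
      destruct Hx as [f [Hf ->]]. rewrite alpha_emb. simpl in Hf.
      destruct Hf as [<- | Hf]; [left; right; reflexivity| right; exists f; auto].
    + eapply d_boxL; [exact (proj1 (Ha _ H))|].
      intros l Hl HOl.
      assert (HO' : O' (map snd l) p) by (apply HE1; auto).
      assert (Hl' : forall r, In r l -> ext Th phi psi r) by (intros r Hr; left; auto).
      eapply wk; [exact (IH _ Hl' HO')| apply img_lset_union |isets].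
  - eapply wk; [eapply (d_cut (G := image al G) (D := image al D) (G' := image al G') (D' := image al D') (p := al p)); [eapply wk; [exact IHderivO1 | isets | isets]|eapply wk; [exact IHderivO2 | isets | isets]] | isets | isets].
Qed.
End Fwd.
Section Sem.
Variable A : Type.
Variables (Th : ctheory A) (phi psi : pform A).
Variables (a a' : form A -> Prop) (O O' : list (pform A) -> form A -> Prop).
Notation Th' := (ext Th phi psi).
Notation al := (alpha phi psi).

Definition ctx := (fset A * fset A)%type.
Definition bt (c : ctx) := derivO Th' a' O' (fst c) (snd c).
Definition pl (c d : ctx) : ctx := (union (fst c) (fst d), union (snd c) (snd d)).
Definition le (c d : ctx) := subset (fst c) (fst d) /\ subset (snd c) (snd d).
Definition orth (S : ctx -> Prop) (c : ctx) := forall d, S d -> bt (pl c d).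

Fixpoint R (f : form A) : ctx -> Prop :=
  match f with
  | Atom x => fun c => bt (pl c (sing (Atom x), @empty A))
  | Top _ => bt
  | Bot _ => fun _ => True
  | Neg p => orth (R p)
  | And p q => fun c => forall x y, orth (R p) x -> orth (R q) y -> bt (pl c (pl x y))
  | Or p q => fun c => R p c /\ R q c
  | Imp p q => fun c => orth (R p) c /\ R q c
  | Box q => fun c => forall l, (forall r, In r l -> Th r) -> O (map snd l) q ->
                                bt (pl c (lset (map fst l), @empty A))
  end.
Definition Lf f := orth (R f).

Ltac lesolve := unfold le, pl in *; simpl in *; split; sets.

Lemma bt_up c d : bt c -> le c d -> bt d.
Proof. intros H [H1 H2]; eapply wk; eauto. Qed.

Lemma comm c d : bt (pl c d) -> bt (pl d c).
Proof. intros H; eapply bt_up; [exact H| lesolve]. Qed.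

Lemma orth_up S c d : orth S c -> le c d -> orth S d.
Proof. intros H Hle e He. eapply bt_up; [apply H, He| destruct Hle; lesolve]. Qed.

Lemma R_up f : forall c d, R f c -> le c d -> R f d.
Proof.
  induction f; intros c d H Hle; simpl in *.
  - eapply bt_up; [exact H| destruct Hle; lesolve].
  - eapply bt_up; eauto.
  - auto.
  - eapply orth_up; eauto.
  - intros x y Hx Hy. eapply bt_up; [apply H; eauto| destruct Hle; lesolve].
  - destruct H; split; eauto.
  - destruct H; split; [eapply orth_up|]; eauto.
  - intros l Hl HO. eapply bt_up; [apply H; eauto| destruct Hle; lesolve].
Qed.

Lemma clash S c : orth S c -> S c -> bt c.
Proof. intros H1 H2. eapply bt_up; [apply H1, H2| lesolve]. Qed.

Lemma triple S c : orth (orth (orth S)) c -> orth S c.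
Proof.
  intros H s Hs. apply H. intros d Hd. apply comm, Hd, Hs.
Qed.

Lemma fact f : forall c, orth (orth (R f)) c -> R f c.
Proof.
  induction f; intros c H; simpl in *.
  - apply H. intros r Hr. apply comm, Hr.
  - assert (E : orth bt (@empty A, @empty A)).
    { intros d Hd. eapply bt_up; [exact Hd| lesolve]. }
    eapply bt_up; [exact (H _ E)| lesolve].
  - auto.
  - apply triple; auto.
  - intros x y Hx Hy. apply H. intros e He. apply comm. apply He; auto.
  - split.
    + apply IHf1. intros d Hd. apply H. intros e [He _]. apply Hd, He.
    + apply IHf2. intros d Hd. apply H. intros e [_ He]. apply Hd, He.
  - split.
    + intros r Hr. apply H. intros e [He _]. apply comm, He, Hr.
    + apply IHf2. intros d Hd. apply H. intros e [_ He]. apply Hd, He.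
  - intros l Hl HO. apply H. intros e He. apply comm, He; auto.
Qed.

Definition Ad (f : form A) (y : form A) := R f (@empty A, sing y) /\ Lf f (sing y, @empty A).

Ltac bt_unfold := unfold Lf, orth, bt, pl in *; simpl in *.

Lemma Ad_atom x : Ad (Atom x) (Atom x).
Proof.
  split; simpl.
  - unfold bt, pl; simpl. eapply wk; [apply (d_ax _ _ _ (Atom x))| sets| sets].
  - intros d Hd. apply comm; auto.
Qed.

Lemma Ad_top : Ad (Top A) (Top A).
Proof.
  split; simpl.
  - unfold bt; simpl. apply d_topR.
  - intros d Hd. eapply bt_up; [exact Hd| lesolve].
Qed.

Lemma Ad_bot : Ad (Bot A) (Bot A).
Proof.
  split; simpl; auto.
  intros d _. unfold bt, pl; simpl. eapply wk; [apply d_botL| sets| sets].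
Qed.

Lemma Ad_neg f y : Ad f y -> Ad (Neg f) (Neg y).
Proof.
  intros [HR HL]; split; simpl.
  - intros r Hr. specialize (HL r Hr). bt_unfold.
    eapply wk; [apply (d_negR (G := fst r) (D := snd r) (p := y)); eapply wk; [exact HL| sets| sets]| sets| sets].
  - intros d Hd. specialize (Hd _ HR). bt_unfold.
    eapply wk; [apply (d_negL (G := fst d) (D := snd d) (p := y)); eapply wk; [exact Hd| sets| sets]| sets| sets].
Qed.

Lemma Ad_and f g y z : Ad f y -> Ad g z -> Ad (And f g) (And y z).
Proof.
  intros [HR1 HL1] [HR2 HL2]; split; simpl.
  - intros x w Hx Hw. specialize (Hx _ HR1). specialize (Hw _ HR2). bt_unfold.
    eapply wk; [apply (d_andR (G := union (fst x) (fst w)) (D := union (snd x) (snd w)) (p := y) (q := z));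
       eapply wk; [exact Hx| sets| sets| exact Hw| sets| sets] | sets| sets].
  - intros c Hc. specialize (Hc _ _ HL1 HL2). bt_unfold.
    eapply wk; [apply (d_andL (G := fst c) (D := snd c) (p := y) (q := z)); eapply wk; [exact Hc| sets| sets]| sets| sets].
Qed.

Lemma Ad_or f g y z : Ad f y -> Ad g z -> Ad (Or f g) (Or y z).
Proof.
  intros [HR1 HL1] [HR2 HL2]; split; simpl.
  - split; apply fact; intros d Hd.
    + specialize (Hd _ HR1). bt_unfold.
      eapply wk; [apply (d_orR (G := fst d) (D := snd d) (p := y) (q := z)); eapply wk; [exact Hd| sets| sets]| sets| sets].
    + specialize (Hd _ HR2). bt_unfold.
      eapply wk; [apply (d_orR (G := fst d) (D := snd d) (p := y) (q := z)); eapply wk; [exact Hd| sets| sets]| sets| sets].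
  - intros c [Hc1 Hc2]. specialize (HL1 _ Hc1). specialize (HL2 _ Hc2). bt_unfold.
    eapply wk; [apply (d_orL (G := fst c) (D := snd c) (p := y) (q := z)); eapply wk; [exact HL1| sets| sets| exact HL2| sets| sets]| sets| sets].
Qed.

Lemma Ad_imp f g y z : Ad f y -> Ad g z -> Ad (Imp f g) (Imp y z).
Proof.
  intros [HR1 HL1] [HR2 HL2]; split; simpl.
  - split.
    + intros r Hr. specialize (HL1 _ Hr). bt_unfold.
      eapply wk; [apply (d_impR (G := fst r) (D := snd r) (p := y) (q := z)); eapply wk; [exact HL1| sets| sets]| sets| sets].
    + apply fact; intros d Hd. specialize (Hd _ HR2). bt_unfold.
      eapply wk; [apply (d_impR (G := fst d) (D := snd d) (p := y) (q := z)); eapply wk; [exact Hd| sets| sets]| sets| sets].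
  - intros c [Hc1 Hc2]. specialize (Hc1 _ HR1). specialize (HL2 _ Hc2). bt_unfold.
    eapply wk; [apply (d_impL (G := fst c) (D := snd c) (p := y) (q := z)); eapply wk; [exact Hc1| sets| sets| exact HL2| sets| sets]| sets| sets].
Qed.

Lemma adeq_emb x : Ad (emb x) (emb x).
Proof.
  induction x; simpl.
  - apply Ad_atom.
  - apply Ad_top.
  - apply Ad_bot.
  - apply Ad_neg; auto.
  - apply Ad_and; auto.
  - apply Ad_or; auto.
  - apply Ad_imp; auto.
Qed.

Lemma get_L (G D0 : fset A) p X :
  (forall Y, (forall g, G g -> Lf g Y) -> (forall d, add D0 p d -> R d Y) -> bt Y) ->
  (forall g, G g -> Lf g X) -> (forall d, D0 d -> R d X) -> Lf p X.
Proof.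
  intros IH HG HD r Hr. apply IH.
  - intros g Hg. eapply orth_up; [apply HG; auto| lesolve].
  - intros d [Hd| ->].
    + eapply R_up; [apply HD; auto| lesolve].
    + eapply R_up; [exact Hr| lesolve].
Qed.

Lemma get_oL (G D0 : fset A) p X :
  (forall Y, (forall g, add G p g -> Lf g Y) -> (forall d, D0 d -> R d Y) -> bt Y) ->
  (forall g, G g -> Lf g X) -> (forall d, D0 d -> R d X) -> orth (Lf p) X.
Proof.
  intros IH HG HD r Hr. apply IH.
  - intros g [Hg| ->].
    + eapply orth_up; [apply HG; auto| lesolve].
    + eapply orth_up; [exact Hr| lesolve].
  - intros d Hd. eapply R_up; [apply HD; auto| lesolve].
Qed.

Arguments clash {S c}.
Arguments get_L {G D0 p X}.
Arguments get_oL {G D0 p X}.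
Arguments fact {f c}.
Lemma sound (G D0 : fset A) : derivO Th a O G D0 ->
  forall X, (forall g, G g -> Lf g X) -> (forall d, D0 d -> R d X) -> bt X.
Proof.
  intros H; induction H; intros X HG HD.
  - exact (clash (HG p eq_refl) (HD p eq_refl)).
  - exact (clash (HG _ eq_refl) I).
  - exact (HD _ eq_refl).
  - apply IHderivO; auto.
  - apply (clash (HG (Neg p) (or_intror eq_refl))).
    exact (get_L IHderivO (fun g Hg => HG g (or_introl Hg)) HD).
  - apply (clash (S := orth (R p))); [|exact (HD (Neg p) (or_intror eq_refl))].
    exact (get_oL IHderivO HG (fun d Hd => HD d (or_introl Hd))).
  - apply (clash (HG (And p q) (or_intror eq_refl))).
    intros x y Hx Hy. apply IHderivO.
    + intros g [[Hg| ->]| ->].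
      * eapply orth_up; [apply HG; left; auto| lesolve].
      * eapply orth_up; [exact Hx| lesolve].
      * eapply orth_up; [exact Hy| lesolve].
    + intros d Hd. eapply R_up; [apply HD; auto| lesolve].
  - assert (H1 := get_L IHderivO1 HG (fun d Hd => HD d (or_introl Hd))).
    assert (H2 := get_L IHderivO2 HG (fun d Hd => HD d (or_introl Hd))).
    eapply bt_up; [apply (HD (And p q) (or_intror eq_refl) X X H1 H2)| lesolve].
  - assert (H1 := fact (get_oL IHderivO1 (fun g Hg => HG g (or_introl Hg)) HD)).
    assert (H2 := fact (get_oL IHderivO2 (fun g Hg => HG g (or_introl Hg)) HD)).
    apply (clash (HG (Or p q) (or_intror eq_refl))). split; auto.
  - destruct (HD (Or p q) (or_intror eq_refl)) as [H1 H2].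
    apply IHderivO; auto. intros d [[Hd| ->]| ->]; [apply HD; left; auto| exact H1| exact H2].
  - assert (H1 := get_L IHderivO1 (fun g Hg => HG g (or_introl Hg)) HD).
    assert (H2 := fact (get_oL IHderivO2 (fun g Hg => HG g (or_introl Hg)) HD)).
    apply (clash (HG (Imp p q) (or_intror eq_refl))). split; auto.
  - destruct (HD (Imp p q) (or_intror eq_refl)) as [H1 H2].
    apply IHderivO.
    + intros g [Hg| ->]; [apply HG; auto| exact H1].
    + intros d [Hd| ->]; [apply HD; left; auto| exact H2].
  -
    assert (H3 := get_L IHderivO HG (fun d Hd => HD d (or_introl Hd))).
    assert (H4 := H3 _ (proj1 (adeq_emb (bigconj (map fst l))))).
    assert (H5 := HD (Box p) (or_intror eq_refl) l H0 H1).
    unfold bt, pl in *; simpl in *.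
    eapply from_conj.
    + eapply wk; [exact H4| sets| sets].
    + eapply wk; [exact H5| sets| sets].
  -
    apply (clash (HG (Box p) (or_intror eq_refl))).
    intros l Hl HO. apply (H1 l Hl HO).
    + intros g [Hg|[f [Hf ->]]].
      * eapply orth_up; [apply HG; left; auto| lesolve].
      * eapply orth_up; [exact (proj2 (adeq_emb f))| ].
        unfold le, pl; simpl; split; [intros y Hy; unfold sing in Hy; subst; right; exists f; auto| sets].
    + intros d Hd. eapply R_up; [apply HD; auto| lesolve].
  - assert (H1 := get_L IHderivO1 (fun g Hg => HG g (or_introl Hg)) (fun d Hd => HD d (or_introl Hd))).
    apply IHderivO2.
    + intros g [Hg| ->]; [apply HG; right; auto| exact H1].
    + intros d Hd; apply HD; right; auto.
Qed.

Arguments sound {G D0}.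
Definition Hyps (p : form A) :=
  a' p /\ (forall psis, O' psis p <-> O psis (al p)) /\
  (forall psis, O psis (Imp (emb psi) (al p)) <-> O (psi::psis) (al p)) /\
  (forall psis psis', incl psis psis' -> O' psis p -> O' psis' p).

Lemma Ad_box p : Hyps p -> Ad (al (Box p)) (Box p).
Proof.
  intros [Hap [HE1 [HE2 HE4]]]. simpl. split.
  - split.
    + intros x y Hx Hy.
      assert (Hphi := Hx _ (proj1 (adeq_emb phi))).
      assert (Cl : R (Box (Imp (emb psi) (al p))) (pl x (@empty A, sing (Box p)))).
      { intros l Hl HOl. apply HE2 in HOl. apply HE1 in HOl.
        unfold bt, pl in *; simpl in *.
        eapply wk; [apply (d_boxR (G := union (fst x) (lset (map fst l))) (D := snd x) ((phi,psi)::l) p Hap)| sets| sets].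
        - intros r [<- | Hr]; [right; auto| left; auto].
        - exact HOl.
        - apply conj_right. intros e [<- | He].
          + eapply wk; [exact Hphi| sets| sets].
          + eapply wk; [apply (d_ax _ _ _ (emb e))| | sets].
            intros z Hz; unfold sing in Hz; subst; right; apply in_map_iff in He as [r [<- Hr]].
            exists (fst r); split; auto; apply in_map; auto. }
      assert (H2 := Hy _ Cl). eapply bt_up; [exact H2| lesolve].
    + intros l Hl HOl. apply HE1 in HOl.
      unfold bt, pl; simpl.
      eapply wk; [apply (d_boxR (G := lset (map fst l)) (D := @empty A) l p Hap)| sets| sets].
      * intros r Hr; left; auto.
      * exact HOl.
      * apply lset_conj. sets.
  - intros c [HA HB]. unfold bt, pl; simpl.
    eapply wk; [apply (d_boxL (G := fst c) (D := snd c) p Hap)| sets| sets].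
    intros l Hl HOl.
    destruct (split_rules Hl) as [Hall|[Hin [l0 [H1 [H2 H3]]]]].
    + assert (H4 := HB l Hall (proj1 (HE1 _) HOl)). unfold bt, pl in H4; simpl in H4.
      eapply wk; [exact H4| sets| sets].
    + assert (HO0 : O (map snd l0) (Imp (emb psi) (al p))).
      { apply HE2. apply HE1. eapply HE4; [exact (incl_snd H3)| exact HOl]. }
      assert (Hb : Lf (Box (Imp (emb psi) (al p))) (lset (map fst l0), @empty A)).
      { intros r Hr. apply comm, Hr; auto. }
      assert (H4 := HA _ _ (proj2 (adeq_emb phi)) Hb). unfold bt, pl in H4; simpl in H4.
      eapply wk; [exact H4| | sets].
      intros y [Hy|[Hy|[f [Hf ->]]]]; [left; auto| |].
      * unfold sing in Hy; subst. right. exists phi; split; auto.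
        apply in_map_iff; exists (phi,psi); auto.
      * right. exists f; split; auto. apply in_map_iff in Hf as [r [<- Hr]]. apply in_map; auto.
Qed.

Lemma adeq x : (forall p, mdepth p < mdepth x -> Hyps p) -> Ad (al x) x.
Proof.
  induction x; simpl; intros H.
  - apply Ad_atom.
  - apply Ad_top.
  - apply Ad_bot.
  - apply Ad_neg; auto.
  - apply Ad_and; [apply IHx1|apply IHx2]; intros p Hp; apply H; lia.
  - apply Ad_or; [apply IHx1|apply IHx2]; intros p Hp; apply H; lia.
  - apply Ad_imp; [apply IHx1|apply IHx2]; intros p Hp; apply H; lia.
  - apply (Ad_box x). apply H; lia.
Qed.

Lemma back G D0 : (forall x, G x \/ D0 x -> forall p, mdepth p < mdepth x -> Hyps p) ->
  derivO Th a O (image al G) (image al D0) -> derivO Th' a' O' G D0.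
Proof.
  intros HH Hd. apply (sound Hd (G, D0)).
  - intros g [x [Hx ->]]. eapply orth_up; [exact (proj2 (adeq x (HH x (or_introl Hx))))| lesolve].
  - intros d [x [Hx ->]]. eapply R_up; [exact (proj1 (adeq x (HH x (or_intror Hx))))| lesolve].
Qed.
End Sem.
Lemma side_equiv A (Th : ctheory A) phi psi n : forall psis q, mdepth q < n ->
  (Side (ext Th phi psi) n psis q <-> Side Th n psis (alpha phi psi q)).
Proof.
  induction n as [|m IH]; intros psis q Hq; [simpl; tauto|].
  assert (HH : forall p, mdepth p < mdepth q ->
     Hyps A phi psi (fun p0 => mdepth p0 < mdepth q) (Side Th m) (Side (ext Th phi psi) m) p).
  { intros p Hp. split; [exact Hp|]. split; [|split].
    - intros ps; apply IH; lia.
    - intros ps; apply Side_imp.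
    - intros ps ps' Hi Hs; eapply Side_mono; eauto. }
  simpl. split; intro H.
  - eapply wk; [eapply (@fwd A Th phi psi (fun p => mdepth p < mdepth (alpha phi psi q))); [| | | |exact H] | |].
    + intros p Hp; rewrite mdepth_imp_emb, !mdepth_alpha; auto.
    + intros p ps Hp; apply (HH p Hp).
    + intros p ps Hp; apply (HH p Hp).
    + intros p ps ps' Hp; apply (HH p Hp).
    + intros y [x [[f [Hf ->]] ->]]; rewrite alpha_emb; exists f; auto.
    + intros y [x [-> ->]]; reflexivity.
  - eapply (@back A Th phi psi (fun p => mdepth p < mdepth (alpha phi psi q))).
    + intros x [[f [Hf ->]]| ->] p Hp; [rewrite mdepth_emb in Hp; lia| apply HH; auto].
    + eapply wk; [exact H| |].
      * intros y [f [Hf ->]]; exists (emb f); split; [exists f; auto| rewrite alpha_emb; auto].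
      * intros y Hy; unfold sing in Hy; subst; exists q; split; reflexivity.
Qed.

Theorem mainTheorem18 (A : Type) (Th : ctheory A) (phi psi : pform A)
    (G D : fset A) :
  Provable (ext Th phi psi) G D <->
  Provable Th (image (alpha phi psi) G) (image (alpha phi psi) D).
Proof.
  assert (HH : forall p, Hyps A phi psi (fun _ => True)
      (fun psis p => Side Th (S (mdepth p)) psis p)
      (fun psis p => Side (ext Th phi psi) (S (mdepth p)) psis p) p).
  { intros p. split; [exact I|]. split; [|split].
    - intros ps. rewrite mdepth_alpha. apply side_equiv; lia.
    - intros ps. simpl (mdepth (Imp _ _)). rewrite mdepth_emb. apply Side_imp.
    - intros ps ps' Hi Hs; eapply Side_mono; eauto. }
  unfold Provable. split; intro H.
  - eapply fwd; [| | | |exact H].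
    + intros; split; exact I.
    + intros p ps _; apply (HH p).
    + intros p ps _; apply (HH p).
    + intros p ps ps' _; apply (HH p).
  - eapply back; [|exact H]. intros; apply HH.
Qed.
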